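(* Let $X_1,\dots,X_n$ be forests and $A\subset X=X_1\times\cdots\times X_n$. Let $A_1$ be the set of $x\in X$ for which there exist $x^1,\dots,x^n\in A$ with $x_j=x^j_j\ge x^i_j$ for all $1\le i,j\le n$, and let $A_2=\{y\in X: y\le x\text{ for some }x\in A_1\}$. Then $A_2$ contains the c.h-envelope $\widehat A$ of $A$.
   Context: A partially ordered set $Y$ is a forest if for every $y_0\in Y$ the set $\{y\ge y_0\}$ is finite and totally ordered. On $X$, $y\le x$ means $y_i\le x_i$ for all $i$. A subset $B\subset X$ is hereditary if $x\in B$, $y\le x$ imply $y\in B$. Points $x,y$ are $c$-comparable if $x_i,y_i$ are comparable for every $i$, and then $x\vee y=(\max(x_i,y_i))_i$. $B$ is concave if $x\vee y\in B$ whenever $x,y\in B$ are $c$-comparable. The c.h-envelope $\widehat A$ is the smallest concave hereditary subset of $X$ containing $A$. *)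

(* Defs.v *)
From mathcomp Require Import all_boot all_order.
Set Implicit Arguments. Unset Strict Implicit. Unset Printing Implicit Defensive.
Import Order.TTheory.
Local Open Scope order_scope.

Definition forest (d : Order.disp_t) (Y : porderType d) : Prop :=
  forall y0 : Y,
    (exists s : seq Y, forall y : Y, y0 <= y -> y \in s) /\
    (forall y z : Y, y0 <= y -> y0 <= z -> y >=< z).

Section Product.
Variables (n : nat) (d : 'I_n -> Order.disp_t) (X : forall i, porderType (d i)).

Definition point := forall i : 'I_n, X i.

Definition ple (y x : point) : Prop := forall i, y i <= x i.

Definition hereditary (B : point -> Prop) : Prop :=
  forall x y, B x -> ple y x -> B y.

Definition ccomparable (x y : point) : Prop := forall i, x i >=< y i.

Definition pjoin (x y : point) : point := fun i => Order.max (x i) (y i).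

Definition concave (B : point -> Prop) : Prop :=
  forall x y, B x -> B y -> ccomparable x y -> B (pjoin x y).

Definition ch_envelope (A : point -> Prop) : point -> Prop :=
  fun x => forall B : point -> Prop,
    concave B -> hereditary B -> (forall a, A a -> B a) -> B x.

Definition A1 (A : point -> Prop) : point -> Prop :=
  fun x => exists xs : 'I_n -> point,
    (forall i, A (xs i)) /\
    (forall i j, x j = xs j j /\ xs i j <= xs j j).

Definition A2 (A : point -> Prop) : point -> Prop :=
  fun y => exists x, A1 A x /\ ple y x.
End Product.

(* Main.v *)
Require Import Defs.
From mathcomp Require Import all_boot all_order.
Import Order.TTheory.
Local Open Scope order_scope.

Lemma max_ub (d : Order.disp_t) (T : porderType d) (a b : T) :
  a >=< b -> a <= Order.max a b /\ b <= Order.max a b.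
Proof. case: comparableP => h //= _; split => //; try exact: ltW. by rewrite h. Qed.
Lemma max_mono (d : Order.disp_t) (T : porderType d) (a b c e : T) :
  a >=< b -> c >=< e -> a <= c -> b <= e -> Order.max a b <= Order.max c e.
Proof.
move=> hab hce hac hbe; have [hc he] := max_ub _ _ _ _ hce.
move: hab; case: comparableP => h //= _.
- exact: le_trans hbe he.
- exact: le_trans hac hc.
- exact: le_trans hac hc.
Qed.

Theorem mainTheorem5 (n : nat) (d : 'I_n -> Order.disp_t)
  (X : forall i : 'I_n, porderType (d i))
  (hforest : forall i : 'I_n, forest (X i))
  (A : point X -> Prop) :
  forall x : point X, ch_envelope A x -> A2 A x.
Proof.
move=> x0 H; apply: H.
- move=> y y' [x [[xs [hA hx]] hyx]] [x' [[xs' [hA' hx']] hyx']] hc.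
  have cmp : forall j, x j >=< x' j.
    move=> j; have := hc j; case/orP => h.
    + have [_ T] := hforest j (y j); apply: T => //.
      exact: le_trans h (hyx' j).
    + have [_ T] := hforest j (y' j); apply: T => //.
      exact: le_trans h (hyx j).
  pose zs := fun j : 'I_n => if x j < x' j then xs' j else xs j.
  exists (fun j => zs j j); split.
  + exists zs; split.
    * by move=> i; rewrite /zs; case: ifP.
    * move=> i j; split => //.
      have [u1 u2] := max_ub _ _ _ _ (cmp j).
      have -> : zs j j = Order.max (x j) (x' j).
        by rewrite /zs /Order.max; case: ifP => _; [case: (hx' j j)|case: (hx j j)].
      rewrite /zs; case: ifP => _.
      -- case: (hx' i j) => e l; apply: le_trans u2; by rewrite e.
      -- case: (hx i j) => e l; apply: le_trans u1; by rewrite e.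
  + move=> j.
    have -> : zs j j = Order.max (x j) (x' j).
      by rewrite /zs /Order.max; case: ifP => _; [case: (hx' j j)|case: (hx j j)].
    exact: max_mono _ _ _ _ _ _ (hc j) (cmp j) (hyx j) (hyx' j).
- by move=> x y [z [hz hxz]] hyx; exists z; split => // i; apply: le_trans (hxz i).
- move=> a ha; exists a; split => // ; exists (fun _ => a); split => //.
Qed.
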